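(* Let $\mathcal C$ be a clustering problem satisfying Assumption 1, $P\in\Lambda$ with $p_{\min}=\min_{i\in[K]}\min_{a\in\mathcal X}P_i(a)>0$, and $\sigma'\in\mathcal C\setminus\{\sigma_P\}$. Then for all $\gamma\in(0,1/K)$, $$C_{g_P^{\sigma'}}(\Sigma_K^\gamma)\le\frac D\gamma,\qquad D=\Big(\max_{\sigma''\in\mathcal C}\max_{m\in[M_{\sigma''}]}|\mathcal A_m^{\sigma''}|\Big)\frac{|\mathcal X|(1-p_{\min})}{4p_{\min}}.$$
   Context: Framework. Let $\mathcal X$ be a finite alphabet with $|\mathcal X|\ge2$, $\mathcal P(\mathcal X)$ the set of probability distributions on $\mathcal X$, and $K\ge2$ an integer (number of arms); $[n]=\{1,\dots,n\}$. A hypothesis is a collection $\sigma=\{\mathcal A_1^\sigma,\dots,\mathcal A_{M_\sigma}^\sigma\}$ ($M_\sigma\ge1$) of pairwise disjoint subsets of $[K]$, each of cardinality at least 2 (clusters); let $\mathcal A^\sigma_{M_\sigma+1}=[K]\setminus\bigcup_{m\le M_\sigma}\mathcal A_m^\sigma$. $\Lambda_\sigma$ is the set of $P\in\mathcal P(\mathcal X)^K$ with $P_i=P_j$ whenever $i,j\in\mathcal A_m^\sigma$ for some $m\le M_\sigma$, and $P_i\neq P_j$ whenever $i\in\mathcal A_{m_1}^\sigma$, $j\in\mathcal A_{m_2}^\sigma$ with $m_1\ne m_2\in[M_\sigma+1]$. A clustering problem is a finite set $\mathcal C$ of hypotheses with $|\mathcal C|\ge2$; $\Lambda=\bigcup_{\sigma\in\mathcal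 C}\Lambda_\sigma$. Hypothesis $\sigma$ dominates $\sigma'$ if every cluster of $\sigma$ is a subset of some cluster of $\sigma'$. Assumption 1: (i) there is no pair $\sigma\neq\sigma'$ in $\mathcal C$ such that $\sigma$ dominates $\sigma'$; (ii) every $P\in\Lambda$ belongs to $\Lambda_\sigma$ for exactly one $\sigma\in\mathcal C$, denoted $\sigma_P$. Functions. $D(P\|Q)$ is the KL divergence. $\Sigma_K=\{w\in\mathbb R^K: w_i\ge0,\sum_iw_i=1\}$, $\Sigma_K^\gamma=\{w\in\Sigma_K:w_i\ge\gamma\ \forall i\}$. For $\mathcal A\subseteq[K]$, $G(P_{\mathcal A},w_{\mathcal A})=0$ if $w_i=0$ for all $i\in\mathcal A$, and otherwise $G(P_{\mathcal A},w_{\mathcal A})=\sum_{i\in\mathcal A}w_iD(P_i\|W)$ with $W=\sum_{i\in\mathcal A}w_iP_i/\sum_{i\in\mathcal A}w_i$. For $\sigma\in\mathcal C$, $g_P^\sigma(w)=\sum_{m=1}^{M_\sigma}G(P_{\mathcal A_m^\sigma},w_{\mathcal A_m^\sigma})$ (a concave differentiable function on $\Sigma_K^\gamma$). For a concave differentiable $f$ on a compact convex set $\mathcal A$, the curvature constant is $$C_f(\mathcal A)=\sup_{x,z\in\mathcal A,\ \alpha\in(0,1],\ y=x+\alpha(z-x)}\frac1{\alpha^2}\big(f(x)-f(y)+\langle y-x,\nabla f(x)\rangle\big).$$ *)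

(* Defs.v *)
From mathcomp Require Import all_boot all_order all_algebra.
From mathcomp Require Import all_classical all_reals all_analysis.
Set Implicit Arguments. Unset Strict Implicit. Unset Printing Implicit Defensive.
Import Order.TTheory GRing.Theory Num.Theory.
Import numFieldNormedType.Exports.
Local Open Scope ring_scope.

Section Defs.
Variables (R : realType) (X : finType) (K : nat).

Definition is_distr (p : X -> R) : Prop :=
  (forall a, 0 <= p a) /\ \sum_(a : X) p a = 1.

Definition is_hypothesis (s : {set {set 'I_K}}) : Prop :=
  s != finset.set0 /\
  (forall A, A \in s -> 2 <= #|A|)%N /\
  (forall A B, A \in s -> B \in s -> A != B -> [disjoint A & B]).

(** the extra block A_{M+1} = [K] \ union of the clusters *)
Definition rest_block (s : {set {set 'I_K}}) : {set 'I_K} := ~: finset.cover s.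

Definition blocks (s : {set {set 'I_K}}) : {set {set 'I_K}} :=
  rest_block s |: s.

Definition in_Lambda (s : {set {set 'I_K}}) (P : 'I_K -> X -> R) : Prop :=
  (forall i, is_distr (P i)) /\
  (forall A i j, A \in s -> i \in A -> j \in A -> P i = P j) /\
  (forall B1 B2 i j, B1 \in blocks s -> B2 \in blocks s -> B1 != B2 ->
     i \in B1 -> j \in B2 -> P i <> P j).

Definition dominates (s s' : {set {set 'I_K}}) : Prop :=
  forall A, A \in s -> exists2 B, B \in s' & A \subset B.

Definition is_clustering_problem (C : {set {set {set 'I_K}}}) : Prop :=
  (2 <= #|C|)%N /\ (forall s, s \in C -> is_hypothesis s).

Definition Lambda (C : {set {set {set 'I_K}}}) (P : 'I_K -> X -> R) : Prop :=
  exists2 s, s \in C & in_Lambda s P.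

Definition assumption1 (C : {set {set {set 'I_K}}}) : Prop :=
  (forall s s', s \in C -> s' \in C -> s != s' -> ~ dominates s s') /\
  (forall P, Lambda C P -> exists! s, s \in C /\ in_Lambda s P).

(** KL divergence, with the convention 0 log (0/q) = 0 *)
Definition KL (p q : X -> R) : R :=
  \sum_(a : X) (if p a == 0 then 0 else p a * ln (p a / q a)).

Definition Gfun (P : 'I_K -> X -> R) (A : {set 'I_K}) (w : 'rV[R]_K) : R :=
  if [forall i in A, w 0 i == 0] then 0
  else let W := fun a => (\sum_(i in A) w 0 i * P i a) / (\sum_(i in A) w 0 i) in
       \sum_(i in A) w 0 i * KL (P i) W.

Definition gfun (P : 'I_K -> X -> R) (s : {set {set 'I_K}}) (w : 'rV[R]_K) : R :=
  \sum_(A in s) Gfun P A w.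

Local Open Scope classical_set_scope.
Definition simplex_ge (gamma : R) : set 'rV[R]_K :=
  [set w | (forall i, gamma <= w 0 i) /\ \sum_i w 0 i = 1].

Definition grad (f : 'rV[R]_K -> R) (x : 'rV[R]_K) : 'rV[R]_K :=
  \row_i ('D_(delta_mx 0 i) f x).

Definition inner (u v : 'rV[R]_K) : R := \sum_i u 0 i * v 0 i.

Definition curvature (f : 'rV[R]_K -> R) (A : set 'rV[R]_K) : \bar R :=
  ereal_sup [set e | exists x z alpha,
     [/\ A x, A z, 0 < alpha <= 1 &
      e = ((f x - f (x + alpha *: (z - x))
            + inner ((x + alpha *: (z - x)) - x) (grad f x)) / alpha ^+ 2)%:E]].

(** p_min = min_i min_a P_i(a)  (probabilities are <= 1, so 1 is a neutral start) *)
Definition pmin (P : 'I_K -> X -> R) : R :=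
  \big[Num.min/1]_(i < K) \big[Num.min/1]_(a : X) P i a.

Definition max_cluster (C : {set {set {set 'I_K}}}) : nat :=
  \max_(s in C) \max_(A in s) #|A|.

End Defs.

(* Main.v *)
Require Import Defs.
From mathcomp Require Import all_boot all_order all_algebra.
From mathcomp Require Import all_classical all_reals all_analysis.
From mathcomp Require Import ring lra zify.
Import Order.TTheory GRing.Theory Num.Theory.
Import numFieldNormedType.Exports.
Local Open Scope ring_scope.
Section Main.
Variables (R : realType) (X : finType) (K : nat) (P : 'I_K -> X -> R).
Lemma dD {f g : R -> R} {x df dg : R} : is_derive x 1 f df -> is_derive x 1 g dg ->
  is_derive x 1 (fun t => f t + g t) (df + dg).
Proof. move=> ? ?; exact: (@is_deriveD R R R f g). Qed.
Lemma dM {f g : R -> R} {x df dg : R} : is_derive x 1 f df -> is_derive x 1 g dg ->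
  is_derive x 1 (fun t => f t * g t) (f x * dg + g x * df).
Proof. move=> ? ?; exact: (@is_deriveM R R f g). Qed.
Lemma dC {x : R} (c : R) : is_derive x 1 (fun _ : R => c) 0.
Proof. exact: is_derive_cst. Qed.
Lemma dI {x : R} : is_derive x 1 (fun t : R => t) 1.
Proof. exact: is_derive_id. Qed.
Lemma dV {f : R -> R} {x df : R} : is_derive x 1 f df -> f x != 0 ->
  is_derive x 1 (fun t => (f t)^-1) (- (f x) ^- 2 * df).
Proof. move=> ? ?; exact: is_deriveV. Qed.
Lemma dln {f : R -> R} {x df : R} : is_derive x 1 f df -> 0 < f x ->
  is_derive x 1 (fun t => ln (f t)) ((f x)^-1 * df).
Proof. move=> H fx; have := @is_derive1_comp R (@ln R) f x _ _ (is_derive1_ln fx) H. by []. Qed.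
Lemma dE {f : R -> R} {x df : R} df' : is_derive x 1 f df -> df = df' -> is_derive x 1 f df'.
Proof. by move=> ? <-. Qed.

Lemma dlin (t0 c d : R) : is_derive t0 1 (fun t : R => t * c + d) c.
Proof.
apply: (dE _ (dD (dM dI (dC c)) (dC d))).
by rewrite mulr0 mulr1 add0r addr0.
Qed.

Lemma dsum {I : Type} (r : seq I) (Pr : pred I) (F : I -> R -> R) (dF : I -> R) (x : R) :
  (forall i, Pr i -> is_derive x 1 (F i) (dF i)) ->
  is_derive x 1 (fun t => \sum_(i <- r | Pr i) F i t) (\sum_(i <- r | Pr i) dF i).
Proof.
move=> H; elim: r => [|a r IH].
  have -> : (fun t => \sum_(i <- [::] | Pr i) F i t) = (fun _ => 0).
    by apply/funext => t; rewrite big_nil.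
  by rewrite big_nil; apply: dC.
case Pa: (Pr a).
  have -> : (fun t => \sum_(i <- a :: r | Pr i) F i t) =
     (fun t => F a t + \sum_(i <- r | Pr i) F i t).
    by apply/funext => t; rewrite big_cons Pa.
  by rewrite big_cons Pa; apply: dD => //; apply: H.
have -> : (fun t => \sum_(i <- a :: r | Pr i) F i t) =
     (fun t => \sum_(i <- r | Pr i) F i t).
  by apply/funext => t; rewrite big_cons Pa.
by rewrite big_cons Pa.
Qed.

Lemma dlnq (p cS S0 cV V0 : R) : 0 < p -> 0 < S0 -> 0 < V0 ->
  is_derive (0:R) 1 (fun t => ln (p * (t * cS + S0) / (t * cV + V0))) (cS / S0 - cV / V0).
Proof.
move=> p0 S00 V00.
have V0n : (0 * cV + V0) != 0 by rewrite mul0r add0r gt_eqF.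
apply: (dE _ (dln (dM (dM (dC p) (dlin 0 cS S0)) (dV (dlin 0 cV V0) V0n)) _)).
  by rewrite /= !mul0r !add0r divr_gt0 ?mulr_gt0.
rewrite /= !mul0r !add0r !mulr0 ?add0r ?addr0.
field. by rewrite !gt_eqF.
Qed.

Lemma D_line (f : 'rV[R]_K -> R) x v :
  'D_v f x = 'D_1 (fun t : R => f (t *: v + x)) 0.
Proof.
rewrite /derive /= scale0r add0r.
suff -> : (fun h : R => h^-1 *: (f ((h%:A + 0) *: v + x) - f x)) =
          (fun h : R => h^-1 *: (f (h *: v + x) - f x)) by [].
by apply/funext => h; rewrite addr0 [h%:A]mulr1.
Qed.


Hypothesis Ppos : forall j a, 0 < P j a.
Hypothesis Psum : forall j, \sum_(a : X) P j a = 1.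

Definition SA (A : {set 'I_K}) (w : 'rV[R]_K) := \sum_(j in A) w 0 j.
Definition VA (A : {set 'I_K}) (w : 'rV[R]_K) a := \sum_(j in A) w 0 j * P j a.
Definition LA (A : {set 'I_K}) (w : 'rV[R]_K) j :=
  \sum_(a : X) P j a * ln (P j a * SA A w / VA A w a).

Lemma Gfun_eq (A : {set 'I_K}) (w : 'rV[R]_K) : (exists2 j, j \in A & w 0 j != 0) ->
  Gfun P A w = \sum_(j in A) w 0 j * LA A w j.
Proof.
move=> [j jA wj].
rewrite /Gfun ifF; last first.
  by apply/negP => /forall_inP /(_ j jA); apply/negP.
apply: eq_bigr => k _; congr (_ * _); rewrite /KL /LA.
apply: eq_bigr => a _; rewrite ifF; last exact: gt_eqF.
by rewrite invf_div mulrA.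
Qed.

Lemma sum_delta (A : {set 'I_K}) i (F : 'I_K -> R) :
  \sum_(j in A) (j == i)%:R * F j = (i \in A)%:R * F i.
Proof.
case: (boolP (i \in A)) => iA.
  rewrite (bigD1 i) //= eqxx mul1r big1 ?addr0 ?mul1r // => j /andP[_ /negbTE ->].
  by rewrite mul0r.
rewrite big1 ?mul0r // => j jA.
have -> : (j == i) = false by apply/negbTE; apply: contraNneq iA => <-.
by rewrite mul0r.
Qed.

Lemma line_entry (x : 'rV[R]_K) i t j :
  (t *: delta_mx 0 i + x) 0 j = t * (j == i)%:R + x 0 j.
Proof. by rewrite !mxE eqxx. Qed.

Lemma dPln (p cS S0 cV V0 : R) : 0 < p -> 0 < S0 -> 0 < V0 ->
  is_derive (0:R) 1 (fun t => p * ln (p * (t * cS + S0) / (t * cV + V0)))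
    (p * (cS / S0 - cV / V0)).
Proof.
move=> p0 S00 V00; apply: (dE _ (dM (dC p) (dlnq _ _ _ _ _ p0 S00 V00))).
by rewrite mulr0 addr0.
Qed.

Lemma dterm (c d : R) (F : X -> R -> R) (dF : X -> R) :
  (forall a, is_derive (0:R) 1 (F a) (dF a)) ->
  is_derive (0:R) 1 (fun t => (t * c + d) * \sum_(a : X) F a t)
     (d * \sum_(a : X) dF a + (\sum_(a : X) F a 0) * c).
Proof.
move=> H; apply: (dE _ (dM (dlin 0 c d) (dsum _ _ _ _ _ (fun a _ => H a)))).
by rewrite mul0r add0r.
Qed.

Lemma sumVA A (w : 'rV[R]_K) : \sum_(a : X) VA A w a = SA A w.
Proof.
rewrite /VA exchange_big /=; apply: eq_bigr => j _.
by rewrite -mulr_sumr Psum mulr1.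
Qed.

Lemma dcluster (A : {set 'I_K}) (x : 'rV[R]_K) (i : 'I_K) :
  (forall j, 0 < x 0 j) -> (exists2 j, j \in A & j != i) ->
  is_derive (0:R) 1 (fun t => Gfun P A (t *: delta_mx 0 i + x))
    ((i \in A)%:R * LA A x i).
Proof.
move=> xpos [j0 j0A j0i].
set cS := (i \in A)%:R : R.
set S0 := SA A x.
have S0pos : 0 < S0.
  rewrite /S0 /SA (bigD1 j0) //= ltr_wpDr ?xpos //.
  by apply: sumr_ge0 => j _; apply/ltW.
have V0pos a : 0 < VA A x a.
  rewrite /VA (bigD1 j0) //= ltr_wpDr ?mulr_gt0 ?xpos //.
  by apply: sumr_ge0 => j _; apply/ltW/mulr_gt0.
have -> : (fun t => Gfun P A (t *: delta_mx 0 i + x)) =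
  (fun t => \sum_(j in A) (t * (j == i)%:R + x 0 j) *
     \sum_(a : X) P j a * ln (P j a * (t * cS + S0) / (t * (cS * P i a) + VA A x a))).
  apply/funext => t; rewrite Gfun_eq; last first.
    by exists j0 => //; rewrite line_entry (negbTE j0i) mulr0 add0r gt_eqF.
  apply: eq_bigr => j _; rewrite line_entry; congr (_ * _).
  apply: eq_bigr => a _; congr (_ * ln (_ * _ / _)).
    rewrite /SA; under eq_bigr do rewrite line_entry.
    by rewrite big_split /= -mulr_sumr (eq_bigr (fun j => (j == i)%:R * 1)) ?sum_delta ?mulr1 // => k _; rewrite mulr1.
  rewrite /VA; under eq_bigr do rewrite line_entry mulrDl -mulrA.
  by rewrite big_split /= -mulr_sumr sum_delta.
apply: (@dE _ _ (\sum_(j in A) (x 0 j * \sum_(a : X) (P j a * (cS / S0 - cS * P i a / VA A x a))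
    + (\sum_(a : X) P j a * ln (P j a * (0 * cS + S0) / (0 * (cS * P i a) + VA A x a))) * (j == i)%:R)) _).
  apply: dsum => j jA; apply: dterm => a.
  exact: dPln.
rewrite big_split /=.
under [X in _ + X = _]eq_bigr do rewrite mulrC.
rewrite sum_delta -/cS.
have H0 : \sum_(j in A) x 0 j * \sum_(a : X) P j a * (cS / S0 - cS * P i a / VA A x a) = 0.
  transitivity (\sum_(a : X) VA A x a * (cS / S0 - cS * P i a / VA A x a)).
    under eq_bigr do rewrite mulr_sumr.
    rewrite exchange_big /=; apply: eq_bigr => a _.
    by rewrite /VA mulr_suml; apply: eq_bigr => j _; rewrite mulrA.
  transitivity (\sum_(a : X) (cS / S0 * VA A x a - cS * P i a)).
    apply: eq_bigr => a _; have := V0pos a; rewrite lt0r => /andP[Va _].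
    by rewrite mulrBr mulrC [VA A x a * _]mulrC divfK.
  rewrite sumrB -mulr_sumr -mulr_sumr sumVA Psum -/S0.
  by field; rewrite gt_eqF.
rewrite H0 add0r /LA -/S0; congr (_ * _); apply: eq_bigr => a _.
by rewrite mul0r add0r mul0r add0r.
Qed.

Lemma ln_le_sub1 (r : R) : 0 < r -> ln r <= r - 1.
Proof.
move=> r0; have := @le_ln1Dx R (r - 1).
rewrite (_ : 1 + (r - 1) = r); last by ring.
by apply; lra.
Qed.

Lemma sum_yP (A : {set 'I_K}) (y : 'rV[R]_K) (c : X -> R) :
  \sum_(i in A) y 0 i * \sum_(a : X) P i a * c a = \sum_(a : X) VA A y a * c a.
Proof.
under eq_bigr do rewrite mulr_sumr.
rewrite exchange_big /=; apply: eq_bigr => a _.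
by rewrite /VA mulr_suml; apply: eq_bigr => j _; rewrite mulrA.
Qed.

Lemma VA_line (A : {set 'I_K}) (x y z : 'rV[R]_K) (al : R) a :
  (forall j, y 0 j = x 0 j + al * (z 0 j - x 0 j)) ->
  VA A y a = VA A x a + al * (VA A z a - VA A x a).
Proof.
move=> yE; rewrite /VA -sumrB mulr_sumr -big_split; apply: eq_bigr => j _.
rewrite yE /=; ring.
Qed.

Lemma SA_line (A : {set 'I_K}) (x y z : 'rV[R]_K) (al : R) :
  (forall j, y 0 j = x 0 j + al * (z 0 j - x 0 j)) ->
  SA A y = SA A x + al * (SA A z - SA A x).
Proof.
move=> yE; rewrite /SA -sumrB mulr_sumr -big_split; apply: eq_bigr => j _.
by rewrite yE.
Qed.

Lemma VA_pos (A : {set 'I_K}) (w : 'rV[R]_K) j0 a : j0 \in A -> (forall j, 0 < w 0 j) -> 0 < VA A w a.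
Proof.
move=> j0A wpos; rewrite /VA (bigD1 j0) //= ltr_wpDr ?mulr_gt0 ?wpos //.
by apply: sumr_ge0 => j _; apply/ltW/mulr_gt0.
Qed.

Lemma SA_pos (A : {set 'I_K}) (w : 'rV[R]_K) j0 : j0 \in A -> (forall j, 0 < w 0 j) -> 0 < SA A w.
Proof.
move=> j0A wpos; rewrite /SA (bigD1 j0) //= ltr_wpDr ?wpos //.
by apply: sumr_ge0 => j _; apply/ltW.
Qed.

Lemma VA_ge0 (A : {set 'I_K}) (w : 'rV[R]_K) a : (forall j, 0 <= w 0 j) -> 0 <= VA A w a.
Proof.
by move=> wpos; apply: sumr_ge0 => j _; apply: mulr_ge0 => //; apply/ltW.
Qed.

Lemma VA_ge_p (A : {set 'I_K}) (w : 'rV[R]_K) (p : R) a : (forall j, 0 <= w 0 j) ->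
  (forall j a, p <= P j a) -> p * SA A w <= VA A w a.
Proof.
move=> wpos pP; rewrite /SA /VA mulr_sumr; apply: ler_sum => j _.
by rewrite mulrC; apply: ler_wpM2l.
Qed.

Lemma key (A : {set 'I_K}) (x y z : 'rV[R]_K) (al p : R) j0 :
  j0 \in A -> 0 < p -> (forall j a, p <= P j a) ->
  (forall j, 0 < x 0 j) -> (forall j, 0 < y 0 j) -> (forall j, 0 <= z 0 j) ->
  (forall j, y 0 j = x 0 j + al * (z 0 j - x 0 j)) ->
  \sum_(i in A) y 0 i * (LA A x i - LA A y i) <=
  al ^+ 2 * (SA A z ^+ 2 / p - SA A z ^+ 2) / SA A y.
Proof.
move=> j0A p0 pP xpos ypos zpos yE.
set Sx := SA A x; set Sy := SA A y; set Sz := SA A z.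
have Sx0 : 0 < Sx by apply: SA_pos j0A xpos.
have Sy0 : 0 < Sy by apply: SA_pos j0A ypos.
have Vx0 a : 0 < VA A x a by apply: VA_pos j0A xpos.
have Vy0 a : 0 < VA A y a by apply: VA_pos j0A ypos.
have Vz0 a : 0 <= VA A z a by apply: VA_ge0.
apply: (@le_trans _ _ (\sum_(i in A) y 0 i * \sum_(a : X) P i a *
     (Sx * VA A y a / (VA A x a * Sy) - 1))).
  apply: ler_sum => i _; apply: ler_wpM2l; first exact/ltW.
  rewrite /LA -sumrB; apply: ler_sum => a _; rewrite -mulrBr.
  apply: ler_wpM2l; first exact/ltW.
  rewrite -ln_div ?posrE ?mulr_gt0 ?divr_gt0 ?invr_gt0 //.
  have -> : P i a * Sx / VA A x a / (P i a * Sy / VA A y a) =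
            Sx * VA A y a / (VA A x a * Sy).
    by field; rewrite !gt_eqF.
  by apply: ln_le_sub1; rewrite divr_gt0 ?mulr_gt0.
have H := sum_yP A y (fun a => Sx * VA A y a / (VA A x a * Sy) - 1); simpl in H; rewrite H {H}.
have E1 : \sum_(a : X) VA A y a * (Sx * VA A y a / (VA A x a * Sy) - 1) =
    Sx / Sy * \sum_(a : X) (VA A y a ^+ 2 / VA A x a) - Sy.
  transitivity (\sum_(a : X) (Sx / Sy * (VA A y a ^+ 2 / VA A x a) - VA A y a)).
    apply: eq_bigr => a _; field.
    by rewrite !gt_eqF.
  by rewrite sumrB -mulr_sumr sumVA.
have E2 : \sum_(a : X) (VA A y a ^+ 2 / VA A x a) =
   (1 - al) ^+ 2 * Sx + 2 * al * (1 - al) * Sz +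
   al ^+ 2 * \sum_(a : X) (VA A z a ^+ 2 / VA A x a).
  transitivity (\sum_(a : X) ((1 - al) ^+ 2 * VA A x a + 2 * al * (1 - al) * VA A z a +
     al ^+ 2 * (VA A z a ^+ 2 / VA A x a))).
    apply: eq_bigr => a _; rewrite (VA_line A x y z al a yE); field.
    by rewrite gt_eqF.
  by rewrite !big_split /= -!mulr_sumr !sumVA.
have E3 : Sy = Sx + al * (Sz - Sx) by apply: SA_line.
have E4 : Sx * \sum_(a : X) (VA A z a ^+ 2 / VA A x a) <= Sz ^+ 2 / p.
  rewrite mulr_sumr.
  apply: (@le_trans _ _ (\sum_(a : X) VA A z a * Sz / p)); last first.
    by rewrite -!mulr_suml sumVA expr2.
  apply: ler_sum => a _.
  have u : Sx / VA A x a <= p^-1.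
    rewrite ler_pdivrMr // ler_pdivlMl //.
    by apply: VA_ge_p => // j; apply/ltW.
  have VzS : VA A z a <= Sz.
    rewrite /Sz -sumVA (bigD1 a) //= lerDl.
    by apply: sumr_ge0 => b _.
  rewrite mulrCA.
  apply: (@le_trans _ _ (VA A z a ^+ 2 * p^-1)).
    by apply: ler_wpM2l => //; apply: sqr_ge0.
  apply: ler_wpM2r; first by rewrite invr_ge0 ltW.
  by rewrite expr2; apply: ler_wpM2l.
rewrite E1 E2.
set Q := \sum_(a : X) (VA A z a ^+ 2 / VA A x a).
have -> : Sx / Sy * ((1 - al) ^+ 2 * Sx + 2 * al * (1 - al) * Sz + al ^+ 2 * Q) - Sy
   = al ^+ 2 * (Sx * Q - Sz ^+ 2) / Sy.
  have Syn : Sy != 0 by rewrite gt_eqF.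
  move: Syn; rewrite E3 => Syn.
  by field.
apply: ler_wpM2r; first by rewrite invr_ge0 ltW.
apply: ler_wpM2l; first exact: sqr_ge0.
by rewrite lerD2r.
Qed.


Lemma two_elems (A : {set 'I_K}) i : (2 <= #|A|)%N -> exists2 j, j \in A & j != i.
Proof.
move=> A2; have : (0 < #|A :\ i|)%N.
  by move: A2; rewrite (cardsD1 i A); case: (i \in A) => /=; lia.
case/card_gt0P => j; rewrite in_setD1 => /andP[ji jA].
by exists j.
Qed.

Lemma grad_eq (s : {set {set 'I_K}}) (x : 'rV[R]_K) i :
  (forall j, 0 < x 0 j) -> (forall A, A \in s -> (2 <= #|A|)%N) ->
  'D_(delta_mx 0 i) (gfun P s) x = \sum_(A in s) (i \in A)%:R * LA A x i.
Proof.
move=> xpos s2; rewrite D_line.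
have H : is_derive (0:R) 1 (fun t => \sum_(A in s) Gfun P A (t *: delta_mx 0 i + x))
   (\sum_(A in s) (i \in A)%:R * LA A x i).
  apply: dsum => A As; apply: dcluster => //.
  exact: two_elems (s2 A As).
rewrite /gfun; exact: (@derive_val _ _ _ _ _ _ _ H).
Qed.

End Main.
Arguments LA {R X K}.
Arguments VA {R X K}.
Arguments SA {R K}.

Lemma bigmin_le (R : realType) (I : eqType) (r : seq I) (F : I -> R) j :
  j \in r -> \big[Num.min/1]_(i <- r) F i <= F j.
Proof.
elim: r => [//|a r IH]; rewrite inE big_cons => /orP[/eqP ->|jr].
  by rewrite ge_min lexx.
by rewrite ge_min IH ?orbT.
Qed.

Lemma bigmin_le1 (R : realType) (I : Type) (r : seq I) (F : I -> R) :
  \big[Num.min/1]_(i <- r) F i <= 1.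
Proof.
elim: r => [|a r IH]; first by rewrite big_nil.
by rewrite big_cons ge_min IH orbT.
Qed.

Lemma pmin_le (R : realType) (X : finType) (K : nat) (P : 'I_K -> X -> R) j a :
  pmin P <= P j a.
Proof.
rewrite /pmin.
apply: (le_trans (@bigmin_le R _ _ (fun i => \big[Num.min/1]_(a : X) P i a) j (mem_index_enum j))).
exact: (@bigmin_le R _ _ (fun a => P j a) a (mem_index_enum a)).
Qed.

Lemma pmin_le1 (R : realType) (X : finType) (K : nat) (P : 'I_K -> X -> R) :
  pmin P <= 1.
Proof. exact: bigmin_le1. Qed.


Theorem lemma8 (R : realType) (X : finType) (K : nat)
  (C : {set {set {set 'I_K}}}) (P : 'I_K -> X -> R)
  (sP s' : {set {set 'I_K}}) (gamma : R) :
  (1 < #|X|)%N -> (2 <= K)%N ->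
  is_clustering_problem C -> assumption1 R X C ->
  sP \in C -> in_Lambda sP P ->      (* sP = sigma_P, P in Lambda *)
  0 < pmin P ->
  s' \in C -> s' != sP ->
  0 < gamma -> gamma < K%:R^-1 ->
  (curvature (gfun P s') (@simplex_ge R K gamma) <=
   ((max_cluster C)%:R * (#|X|%:R * (1 - pmin P) / (4 * pmin P)) / gamma)%:E)%E.
Proof.
move=> X2 K2 [C2 Chyp] _ sPC [Pd _] p0 s'C _ g0 _.
set p := pmin P.
have pP : forall j a, p <= P j a by move=> j a; apply: pmin_le.
have p1 : p <= 1 by apply: pmin_le1.
have Ppos : forall j a, 0 < P j a by move=> j a; apply: lt_le_trans (pP j a).
have Psum : forall j, \sum_(a : X) P j a = 1 by move=> j; case: (Pd j).
have [s'n0 [s'2 s'dis]] := Chyp s' s'C.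
have M2 : (2 <= max_cluster C)%N.
  have [A0 A0s] := set0Pn _ s'n0.
  apply: (leq_trans (s'2 A0 A0s)).
  apply: (leq_trans _ (@leq_bigmax_cond _ (fun s => s \in C) (fun s => \max_(A in s) #|A|) s' s'C)).
  exact: (@leq_bigmax_cond _ (fun A => A \in s') (fun A => #|A|) A0 A0s).
apply: ge_ereal_sup => e [x [z [al [xS zS /andP[al0 al1] ->]]]].
rewrite lee_fin.
case: xS => xg xsum; case: zS => zg zsum.
set y := x + al *: (z - x).
have yE : forall j, y 0 j = x 0 j + al * (z 0 j - x 0 j) by move=> j; rewrite !mxE.
have xpos j : 0 < x 0 j by apply: lt_le_trans (xg j).
have zpos j : 0 <= z 0 j by apply/ltW/(lt_le_trans g0 (zg j)).
have yg j : gamma <= y 0 j.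
  rewrite yE; have := xg j; have := zg j; nra.
have ypos j : 0 < y 0 j by apply: lt_le_trans (yg j).
have Hin : inner (y - x) (grad (gfun P s') x) =
    \sum_(A in s') \sum_(i in A) (y 0 i - x 0 i) * LA P A x i.
  rewrite /inner.
  under eq_bigr => i _ do rewrite !mxE (@grad_eq _ _ _ P Ppos Psum s' x i xpos s'2) mulr_sumr.
  rewrite exchange_big /=; apply: eq_bigr => A _.
  rewrite [RHS]big_mkcond /=; apply: eq_bigr => i _.
  by rewrite yE; case: (i \in A); rewrite ?mul1r ?mul0r ?mulr0.
have Gw (w : 'rV[R]_K) A : (forall j, 0 < w 0 j) -> A \in s' ->
    Gfun P A w = \sum_(i in A) w 0 i * LA P A w i.
  move=> wpos As; apply: (@Gfun_eq _ _ _ P Ppos).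
  have [j jA _] := @two_elems K A (Ordinal (ltn_trans (ltnSn 0) K2)) (s'2 A As).
  by exists j => //; rewrite gt_eqF.
have HN : gfun P s' x - gfun P s' y + inner (y - x) (grad (gfun P s') x) =
    \sum_(A in s') \sum_(i in A) y 0 i * (LA P A x i - LA P A y i).
  rewrite Hin /gfun -sumrB -big_split /=; apply: eq_bigr => A As.
  rewrite (Gw x) // (Gw y) // -sumrB -big_split /=; apply: eq_bigr => i _.
  ring.
rewrite HN.
set c := p^-1 - 1.
have c0 : 0 <= c by rewrite /c subr_ge0 invf_ge1.
have HA : forall A, A \in s' ->
    \sum_(i in A) y 0 i * (LA P A x i - LA P A y i) <= al ^+ 2 * c * SA A z / gamma.
  move=> A As.
  have [j0 j0A _] := @two_elems K A (Ordinal (ltn_trans (ltnSn 0) K2)) (s'2 A As).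
  apply: le_trans (@key _ _ _ P Ppos Psum A x y z al p j0 j0A p0 pP xpos ypos zpos yE) _.
  have Sy : gamma <= SA A y.
    rewrite /SA (bigD1 j0) //= -[gamma]addr0 lerD ?yg //.
    by apply: sumr_ge0 => j _; apply/ltW.
  have Sz0 : 0 <= SA A z by apply: sumr_ge0.
  have Sz1 : SA A z <= 1.
    rewrite -zsum /SA [X in _ <= X](bigID (fun j => j \in A)) /= lerDl.
    by apply: sumr_ge0.
  have Sy0 : 0 < SA A y by apply: lt_le_trans Sy.
  have -> : al ^+ 2 * (SA A z ^+ 2 / p - SA A z ^+ 2) / SA A y =
            al ^+ 2 * c * (SA A z * (SA A z / SA A y)).
    by rewrite /c; field; rewrite !gt_eqF.
  rewrite -[X in _ <= X]mulrA; apply: ler_wpM2l; first by rewrite mulr_ge0 ?sqr_ge0.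
  apply: ler_wpM2l => //.
  rewrite ler_pdivrMr //; apply: le_trans Sz1 _.
  by rewrite ler_pdivlMl // mulr1.
have Ssum : \sum_(A in s') SA A z <= 1.
  have tri : finset.trivIset s' by apply/finset.trivIsetP => A B As Bs; apply: s'dis.
  rewrite /SA -finset.big_trivIset // -zsum [X in _ <= X](bigID (fun j => j \in finset.cover s')) /= lerDl.
  by apply: sumr_ge0.
have Nb : \sum_(A in s') \sum_(i in A) y 0 i * (LA P A x i - LA P A y i) <=
          al ^+ 2 * c / gamma.
  apply: le_trans (ler_sum _ HA) _.
  rewrite -mulr_suml -mulr_sumr.
  apply: ler_wpM2r; first by rewrite invr_ge0 ltW.
  rewrite -[X in _ <= X]mulr1; apply: ler_wpM2l => //.
  by rewrite mulr_ge0 ?sqr_ge0.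
have al2 : 0 < al ^+ 2 by rewrite exprn_gt0.
rewrite ler_pdivrMr //; apply: le_trans Nb _.
rewrite -mulrA mulrC; apply: ler_wpM2r; first exact: ltW.
apply: ler_wpM2r; first by rewrite invr_ge0 ltW.
have -> : (max_cluster C)%:R * (#|X|%:R * (1 - p) / (4 * p)) =
          ((max_cluster C)%:R * #|X|%:R / 4) * c.
  by rewrite /c; field; rewrite gt_eqF.
apply: ler_peMl => //.
rewrite ler_pdivlMr // mul1r -natrM.
have -> : (4 : R) = 4%N%:R by [].
rewrite ler_nat.
exact: (@leq_mul 2 2).
Qed.
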